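(* Let $G$ be a finite group with commutator subgroup $G'$. Then for each $d\in\mathbb{N}$ one has $|G'|\,E_d\in\mathbb{Z}[G']$.
   Context: $E_d=E_{G,d}:=\sum_{\chi}e_\chi$, the sum over all complex irreducible characters $\chi$ of $G$ of degree $\chi(1)=d$, where $e_\chi=\frac{\chi(1)}{|G|}\sum_{g\in G}\chi(g^{-1})g$. *)

(* Defs.v *)
From HB Require Import structures.
From mathcomp Require Import all_boot all_order all_algebra all_fingroup all_solvable all_field all_character.
Set Implicit Arguments. Unset Strict Implicit. Unset Printing Implicit Defensive.
Import Order.TTheory GRing.Theory Num.Theory.
Local Open Scope ring_scope.

(* Elements of the complex group algebra C[G] are represented by their
   coefficient functions gT -> algC (an element sum_g a_g g is identified
   with g |-> a_g).  The central idempotent of chi is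
   e_chi = chi(1)/|G| * sum_(g in G) chi(g^-1) g, so its coefficient at g
   is chi(1)/|G| * chi(g^-1) (which vanishes outside G). *)
Definition e_chi_coef (gT : finGroupType) (G : {group gT}) (i : Iirr G)
    (g : gT) : algC :=
  'chi_i 1%g / #|G|%:R * 'chi_i (g^-1)%g.

Definition E_coef (gT : finGroupType) (G : {group gT}) (d : nat) (g : gT)
    : algC :=
  \sum_(i : Iirr G | 'chi_i 1%g == d%:R) e_chi_coef i g.

(* Main.v *)
Require Import Defs.
From HB Require Import structures.
From mathcomp Require Import all_boot all_order all_algebra all_fingroup all_solvable all_field all_character.
From mathcomp Require Import ring.
Set Implicit Arguments. Unset Strict Implicit.
Import Order.TTheory GRing.Theory Num.Theory.
Local Open Scope ring_scope.

Definition coefd (gT : finGroupType) (G : {group gT}) (d : nat) (i : Iirr G) : algC :=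
  ('chi_i 1%g == d%:R)%:R * 'chi_i 1%g.

Definition Phi (gT : finGroupType) (G : {group gT}) (d : nat) : 'CF(G) :=
  \sum_i coefd d i *: 'chi_i.

Lemma E_Phi (gT : finGroupType) (G : {group gT}) (d : nat) g :
  E_coef G d g = Phi G d (g^-1)%g / #|G|%:R.
Proof.
rewrite /E_coef /Phi sum_cfunE mulr_suml big_mkcond /=; apply: eq_bigr => i _.
rewrite cfunE /e_chi_coef /coefd; case: eqP => _; last by rewrite !mul0r.
by rewrite mul1r mulrAC.
Qed.

Lemma Phi_aut (gT : finGroupType) (G : {group gT}) (d : nat)
  (u : {rmorphism algC -> algC}) x : u (Phi G d x) = Phi G d x.
Proof.
rewrite /Phi !sum_cfunE rmorph_sum [RHS](reindex_inj (aut_Iirr_inj u)) /=.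
apply: eq_bigr => i _; rewrite !cfunE rmorphM /coefd aut_IirrE cfAut_irr1.
rewrite rmorphM rmorph_nat; congr (_ * _ * _); last by rewrite cfunE.
by rewrite aut_natr ?Cnat_irr1.
Qed.

Lemma Phi_lin (gT : finGroupType) (G : {group gT}) (d : nat) (l : Iirr G) x :
  'chi[G]_l \is a linear_char -> Phi G d x = 'chi_l x * Phi G d x.
Proof.
move=> Ll.
have irrM i : 'chi_l * 'chi_i \in irr G by rewrite mul_lin_irr ?mem_irr.
pose s i := cfIirr ('chi_l * 'chi_i).
have sE i : 'chi_(s i) = 'chi_l * 'chi_i by rewrite cfIirrE.
have inj_s : injective s.
  move=> i j /(congr1 (fun k => 'chi[G]_k)); rewrite !sE.
  by move/(mulrI (lin_char_unitr Ll))/irr_inj.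
rewrite {1}(_ : Phi G d x = \sum_i coefd d (s i) * 'chi_(s i) x); last first.
  by rewrite /Phi sum_cfunE (reindex_inj inj_s); apply: eq_bigr => i _; rewrite cfunE.
rewrite /Phi sum_cfunE mulr_sumr.
apply: eq_bigr => i _; rewrite !cfunE /coefd sE !cfunE lin_char1 // mul1r.
by rewrite mulrCA.
Qed.

Lemma Phi_supp (gT : finGroupType) (G : {group gT}) (d : nat) x :
  x \notin (G^`(1))%g -> Phi G d x = 0.
Proof.
rewrite -cap_cfker_lin_irr => xG'.
case: (pickP [pred l | ('chi[G]_l \is a linear_char) && (x \notin cfker 'chi_l)])
  => [l /andP[Ll xK] | none]; last first.
  exfalso; move/negP: xG'; apply; apply/bigcapP => i Li.
  by move: (none i) => /=; rewrite Li /= => /negbFE.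
have ne : 'chi_l x != 1.
  by move: xK; rewrite cfkerEirr inE lin_char1.
have E := Phi_lin d x Ll.
have: (1 - 'chi_l x) * Phi G d x = 0 by rewrite mulrBl mul1r -E subrr.
by move/eqP; rewrite mulf_eq0 subr_eq0 eq_sym (negPf ne) /= => /eqP.
Qed.

Lemma conv (gT : finGroupType) (G : {group gT}) (a : Iirr G -> algC) y :
  \sum_(x in G) (\sum_i a i *: 'chi[G]_i) (x * y)%g * (\sum_i a i *: 'chi[G]_i) (x^-1)%g
  = #|G|%:R * \sum_i (a i ^+ 2 / 'chi_i 1%g) * 'chi_i y.
Proof.
have GO i j : \sum_(x in G) 'chi[G]_i (x * y)%g * 'chi_j (x^-1)%g
    = #|G|%:R * ((i == j)%:R * ('chi_i y / 'chi_i 1%g)).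
  by rewrite -(generalized_orthogonality_relation y i j) mulrA mulfV ?neq0CG ?mul1r.
rewrite (eq_bigr (fun x => \sum_i \sum_j a i * a j * ('chi[G]_i (x * y)%g * 'chi_j (x^-1)%g))); last first.
  move=> x _; rewrite !sum_cfunE big_distrl; apply: eq_bigr => i _.
  rewrite big_distrr; apply: eq_bigr => j _; rewrite !cfunE; exact: mulrACA.
rewrite exchange_big mulr_sumr; apply: eq_bigr => i _ /=.
rewrite exchange_big /=.
under eq_bigr do rewrite -mulr_sumr GO.
rewrite (bigD1 i) //= big1 ?addr0; last first.
  by move=> j; rewrite eq_sym => /negPf ->; rewrite mul0r !mulr0.
rewrite eqxx mul1r; set u := 'chi_i y; set v := 'chi_i 1%g; set w := a i; set n := #|G|%:R; rewrite expr2; ring.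
Qed.

Lemma Phi_rat (gT : finGroupType) (G : {group gT}) (d : nat) x :
  Phi G d x \in Crat.
Proof.
have [Gx|nGx] := boolP (x \in G); last by rewrite cfun0 // Crat0.
have [Qn galQn [QnC gQnC [w [_ _] QnG]]] := group_num_field_exists G.
have charPhi : Phi G d \is a character.
  rewrite /Phi rpred_sum // => i _; rewrite rpredZ_nat ?irr_char //.
  by rewrite /coefd rpredM ?rpred_nat ?Cnat_irr1.
have [a Da] := QnG _ G _ charPhi x (order_dvdG Gx).
have fixa : a \in fixedField ('Gal({:Qn} / 1))%g.
  apply/fixedFieldP; first exact: memvf.
  move=> nu Gnu; have [nuC DnuC] := gQnC nu.
  by apply: (fmorph_inj QnC); rewrite DnuC Da Phi_aut.
move: fixa; have /galois_fixedField-> := galQn.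
rewrite -Da => /vlineP[k ->]; rewrite rmorphZ_num rmorph1 mulr1.
exact: Crat_rat.
Qed.

Lemma cfdot_sumZ (gT : finGroupType) (H : {group gT}) (b : Iirr H -> algC) k :
  '[\sum_j b j *: 'chi[H]_j, 'chi_k] = b k.
Proof.
rewrite cfdot_suml (bigD1 k) //= cfdotZl cfdot_irr eqxx mulr1 big1 ?addr0 //.
by move=> j /negPf nejk; rewrite cfdotZl cfdot_irr nejk mulr0.
Qed.

Theorem lemma3p7 (gT : finGroupType) (G : {group gT}) (d : nat) :
  (forall g : gT, (#|(G^`(1))%g|%:R * E_coef G d g) \in Num.int) /\
  (forall g : gT, g \notin (G^`(1))%g -> E_coef G d g = 0).
Proof.
have supp g : g \notin (G^`(1))%g -> E_coef G d g = 0.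
  by move=> ng; rewrite E_Phi Phi_supp ?mul0r // groupV.
split => [g|]; last exact: supp.
have [Hg|nHg] := boolP (g \in (G^`(1))%g); last by rewrite supp // mulr0 rpred0.
pose H := (G^`(1))%G.
have sHG : H \subset G := der_sub 1 G.
pose phi := 'Res[H] (Phi G d).
pose c j := '[phi, 'chi[H]_j].
have Dphi : phi = \sum_j c j *: 'chi_j := cfun_sum_cfdot phi.
have resG y : y \in H ->
    \sum_(x in G) Phi G d (x * y)%g * Phi G d (x^-1)%g
    = \sum_(x in H) phi (x * y)%g * phi (x^-1)%g.
  move=> Hy; rewrite (bigID (fun x => x \in H)) /= [X in _ + X]big1 ?addr0; last first.
    move=> x /andP[_ nHx]; by rewrite [Phi G d (x^-1)%g]Phi_supp ?mulr0 // (@groupV _ H).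
  rewrite (eq_bigl (fun x => x \in H)); last first.
    by move=> x; rewrite andb_idl // => /(subsetP sHG).
  by apply: eq_bigr => x Hx; rewrite !cfResE ?groupM ?groupV.
have key j : c j = 0 \/ c j * #|H|%:R / #|G|%:R = 'chi[H]_j 1%g.
  have eqCF : \sum_j (#|H|%:R * (c j ^+ 2 / 'chi[H]_j 1%g)) *: 'chi[H]_j
      = \sum_j (#|G|%:R * c j) *: 'chi_j.
    apply/cfun_inP => y Hy; rewrite !sum_cfunE.
    transitivity (\sum_(x in H) phi (x * y)%g * phi (x^-1)%g).
      rewrite Dphi conv mulr_sumr; apply: eq_bigr => i _; rewrite cfunE.
      by rewrite -!mulrA.
    transitivity (#|G|%:R * phi y).
      rewrite -(resG y Hy) cfResE ?(subsetP sHG) // conv; congr (_ * _).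
      rewrite /Phi sum_cfunE; apply: eq_bigr => i _; rewrite cfunE /coefd.
      case: eqP => _ /=; last by rewrite !mul0r expr2 !mul0r.
      by rewrite !mul1r expr2 mulfK ?irr1_neq0.
    rewrite Dphi sum_cfunE mulr_sumr; apply: eq_bigr => i _.
    by rewrite !cfunE mulrA.
  have := congr1 (fun f => '[f, 'chi[H]_j]) eqCF; rewrite /= !cfdot_sumZ => E.
  have [->|nzc] := eqVneq (c j) 0; first by left.
  right; have nz1 := irr1_neq0 j; have nzG := neq0CG G.
  have -> : c j * #|H|%:R / #|G|%:R
      = (#|H|%:R * (c j ^+ 2 / 'chi[H]_j 1%g)) * ('chi[H]_j 1%g / (c j * #|G|%:R)).
    by field; rewrite nz1 nzc nzG.
  by rewrite E; field; rewrite nzc nzG.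
rewrite E_Phi; apply: Cint_rat_Aint.
  by rewrite rpredM ?rpred_div ?rpred_nat ?Phi_rat.
have Hg' : (g^-1)%g \in H by rewrite groupV.
have -> : #|G^`(1)%g|%:R * (Phi G d (g^-1)%g / #|G|%:R)
    = \sum_j (c j * #|H|%:R / #|G|%:R) * 'chi[H]_j (g^-1)%g.
  rewrite -(cfResE (Phi G d) sHG Hg') -/phi {1}Dphi sum_cfunE.
  rewrite mulrC mulr_suml mulr_suml; apply: eq_bigr => j _; rewrite cfunE.
  set u := 'chi_j _; set k := #|G|%:R^-1; set h := #|H|%:R.
  change (c j * u * k * h = c j * h * k * u); ring.
apply: rpred_sum => j _.
have [->|->] := key j; first by rewrite !mul0r rpred0.
by rewrite rpredM ?Aint_irr.
Qed.
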